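(* Every simple undirected graph $G$ is the intersection graph of an exactly hittable hypergraph $\mathcal{X}=(\mathcal{U},\mathcal{F})$. Further, if $G$ is a connected chordal graph, then $G$ is the intersection graph of an exactly hittable family of subtrees of a tree.
   Context: The intersection graph of a family $\mathcal{F}$ of sets has one vertex $v_F$ for each $F\in\mathcal{F}$, with $v_{F_i}v_{F_j}$ an edge iff $F_i\cap F_j\neq\emptyset$. A hypergraph (set system) $(\mathcal{U},\mathcal{F})$ is exactly hittable if there is $T\subseteq\mathcal{U}$ with $|T\cap F|=1$ for all $F\in\mathcal{F}$; for a family of subtrees of a tree, exact hittability means there is a set $T$ of tree nodes meeting every subtree in exactly one node. A chordal graph is a graph with no induced cycle of length at least $4$. *)

(* Defs.v *)
From mathcomp Require Import all_boot.
Set Implicit Arguments. Unset Strict Implicit. Unset Printing Implicit Defensive.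

Definition simple_graph (V : finType) (e : rel V) : Prop :=
  symmetric e /\ irreflexive e.

Definition connected_graph (V : finType) (e : rel V) : Prop :=
  forall x y : V, connect e x y.

Definition is_cycle (V : finType) (e : rel V) (c : seq V) : Prop :=
  uniq c /\ 3 <= size c /\
  forall i, i < size c -> forall x0 : V,
    e (nth x0 c i) (nth x0 c (i.+1 %% size c)).

Definition induced_cycle (V : finType) (e : rel V) (c : seq V) : Prop :=
  uniq c /\ 3 <= size c /\
  forall i j, i < size c -> j < size c -> forall x0 : V,
    e (nth x0 c i) (nth x0 c j) <->
    (j = i.+1 %% size c \/ i = j.+1 %% size c).

Definition chordal (V : finType) (e : rel V) : Prop :=
  forall c : seq V, induced_cycle e c -> size c < 4.

Definition is_tree (W : finType) (t : rel W) : Prop :=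
  0 < #|W| /\ simple_graph t /\ connected_graph t /\
  forall c : seq W, ~ is_cycle t c.

Definition subtree (W : finType) (t : rel W) (S : {set W}) : Prop :=
  S != set0 /\
  forall x y, x \in S -> y \in S ->
    connect [rel a b | [&& t a b, a \in S & b \in S]] x y.

(* G = (V, e) is the intersection graph of the family (F v)_{v in V}, the sets
   being pairwise distinct (so the family has exactly one member per vertex). *)
Definition is_intersection_graph (V : finType) (e : rel V) (U : finType)
    (F : V -> {set U}) : Prop :=
  injective F /\
  forall u v : V, u != v -> (e u v <-> F u :&: F v != set0).

Definition exactly_hittable (V : finType) (U : finType) (F : V -> {set U}) : Prop :=
  exists T : {set U}, forall v : V, #|T :&: F v| = 1.

(* Main.v *)
Require Import Defs.
From mathcomp Require Import all_boot zify.
From Stdlib Require Import Classical.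
Set Implicit Arguments. Unset Strict Implicit. Unset Printing Implicit Defensive.

Lemma modS_small n i : i < n -> i.+1 %% n = if i.+1 == n then 0 else i.+1.
Proof.
move=> lt; case: eqP => [->|ne]; first by rewrite modnn.
by rewrite modn_small //; lia.
Qed.

Definition walk_ok (V : finType) (e : rel V) k (f : nat -> V) (u : V) :=
  (forall i, i < k -> e (f i) (f i.+1)) /\ e u (f 0) /\ e u (f k) /\
      f 0 != f k /\ ~~ e (f 0) (f k) /\
      (forall i, 0 < i < k -> (f i != u) && ~~ e u (f i)).

Lemma shortcut (V : finType) (e : rel V) k (f : nat -> V) u a d :
  walk_ok e k f u -> 0 < d -> a + d <= k ->
  (a + d < k -> e (f a) (f (a + d).+1)) -> (a + d = k -> f a = f k) ->
  walk_ok e (k - d) (fun i => if i <= a then f i else f (i + d)) u.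
Proof.
case=> Hw [H0 [Hk [Hne [Hnc Hin]]]] dpos adk Hs Heq.
have g0 : (if 0 <= a then f 0 else f (0 + d)) = f 0 by [].
have gk : (if k - d <= a then f (k - d) else f (k - d + d)) = f k.
  case: leqP => h; last by congr f; lia.
  have -> : k - d = a by lia.
  by apply: Heq; lia.
rewrite /walk_ok g0 gk; do !split => //. 
- move=> i lt /=; case: (ltngtP i a) => h.
  + apply: Hw; lia.
  + 
    have -> : i.+1 + d = (i + d).+1 by lia. apply: Hw; lia.
  + subst i.
    have -> : a.+1 + d = (a + d).+1 by lia. apply: Hs; lia.
- move=> i /andP[h1 h2] /=; case: leqP => h.
  + apply: Hin; lia.
  + apply: Hin; lia.
Qed.

Lemma no_bad_walk (V : finType) (e : rel V) :
  symmetric e -> irreflexive e -> chordal e ->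
  forall k f u, walk_ok e k f u -> False.
Proof.
move=> sym irr ch k; have [n Hn] := ubnP k; elim: n k Hn => // n IH k Hk f u W.
case: (classic (exists a b, [/\ a < b <= k, a.+1 < b, (a != 0) || (b != k) &
                     (f a == f b) || e (f a) (f b)])) =>
  [[a [b [/andP[ab bk] ab1 nz Hab]]]|nobad].
  case/orP: Hab => [/eqP Heqab | Hch].
    apply: (IH (k - (b - a)) _ (fun i => if i <= a then f i else f (i + (b - a))) u); first lia.
    apply: shortcut => //; try lia.
      move=> lt. have -> : (a + (b - a)).+1 = b.+1 by lia. rewrite Heqab.
      case: W => Hw _; apply: Hw; lia.
    move=> eq. have Hbk : b = k by lia. by rewrite -Hbk.
  apply: (IH (k - (b - a - 1)) _ (fun i => if i <= a then f i else f (i + (b - a - 1))) u); first lia.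
  apply: shortcut => //; try lia.
    move=> _. have -> : (a + (b - a - 1)).+1 = b by lia. done.
case: W => Hw [H0 [Hk' [Hne [Hnc Hin]]]].
have Hd : forall a b, a < b <= k -> f a != f b.
  move=> a b /andP[ab bk]; apply/negP => /eqP E.
  case: (ltngtP a.+1 b) => h.
  - case: (boolP ((a != 0) || (b != k))) => nz.
      by apply: nobad; exists a, b; split => //; [apply/andP|rewrite E eqxx].
    move: nz; rewrite negb_or !negbK => /andP[/eqP a0 /eqP bk0]; subst.
    by rewrite E eqxx in Hne.
  - lia.
  - subst b; have := Hw a bk; by rewrite E irr.
have He : forall a b, a < b <= k -> e (f a) (f b) -> b = a.+1.
  move=> a b /andP[ab bk] Eab.
  case: (ltngtP a.+1 b) => h; last by [].
  - case: (boolP ((a != 0) || (b != k))) => nz.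
      by exfalso; apply: nobad; exists a, b; split => //; [apply/andP|rewrite Eab orbT].
    move: nz; rewrite negb_or !negbK => /andP[/eqP a0 /eqP bk0]; subst.
    by rewrite Eab in Hnc.
  - lia.
have k2 : 2 <= k.
  case: (ltnP 1 k) => // k1; exfalso.
  have : (k = 0) \/ (k = 1) by lia.
  case=> E; subst k; first by rewrite eqxx in Hne.
  by rewrite Hw in Hnc.
pose h := fun i => if i is j.+1 then f j else u.
have Hm : forall i, i < k.+2 -> i.+1 %% k.+2 = if i == k.+1 then 0 else i.+1.
  move=> i lt; case: eqP => [->|ne]; first by rewrite modnn.
  by rewrite modn_small //; lia.
have hu : forall j, j <= k -> f j != u.
  move=> j jk; case: (posnP j) => [->|jp].
    by apply/eqP => E; move: H0; rewrite E irr.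
  case: (ltngtP j k) => [jk'|kj|->]; [|exfalso; lia|].
    by case/andP: (Hin j (introT andP (conj jp jk'))).
  by apply/eqP => E; move: Hk'; rewrite E irr.
have := ch (mkseq h k.+2); rewrite size_mkseq.
have -> : (k.+2 < 4) = false by lia.
move=> H; apply: notF; apply: H.
split; last split; rewrite ?size_mkseq //; first last.
  move=> i j Hi Hj x0; rewrite !nth_mkseq // !Hm //.
  case: i Hi => [|i] Hi; case: j Hj => [|j] Hj /=.
  - by rewrite irr; split => // [[]].
  - split.
      move=> Ej; case: (posnP j) => [->|jp]; first by left.
      case: (ltngtP j k) => [jk'|kj|->]; [|exfalso; lia|]; last by right; rewrite eqxx.
      by case/andP: (Hin j (introT andP (conj jp jk'))); rewrite Ej.
    case=> E.
      by have -> : j = 0 by lia.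
    have -> : j = k by move: E; case: eqP => // ?; lia.
    done.
  - rewrite sym; split.
      move=> Ej; case: (posnP i) => [->|ip]; first by right.
      case: (ltngtP i k) => [ik'|kj|->]; [|exfalso; lia|]; last by left; rewrite eqxx.
      by case/andP: (Hin i (introT andP (conj ip ik'))); rewrite Ej.
    case=> E.
      have -> : i = k by move: E; case: eqP => // ?; lia.
      done.
    by have -> : i = 0 by lia.
  - split.
      move=> Eij; case: (ltngtP i j) => h1.
      + have := He i j; rewrite h1 /= => /(_ _ Eij) ->; last lia.
        left; case: eqP => //; lia.
      + have := He j i; rewrite h1 /= sym => /(_ _ Eij) ->; last lia.
        right; case: eqP => //; lia.
      + by subst; rewrite irr in Eij.
    case.
      case: eqP => // _ [E]; subst j; apply: Hw; lia.
    case: eqP => // _ [E]; subst i; rewrite sym; apply: Hw; lia.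
  lia.
rewrite /mkseq map_inj_in_uniq ?iota_uniq // => i j; rewrite !mem_iota /= => Hi Hj.
case: i Hi => [|i] Hi; case: j Hj => [|j] Hj //= E.
- have Hj' : j <= k by lia. by move: (hu j Hj'); rewrite -E eqxx.
- have Hi' : i <= k by lia. by move: (hu i Hi'); rewrite E eqxx.
- congr S; case: (ltngtP i j) => h1 //.
    have Hj' : i < j <= k by rewrite h1; lia.
    by move: (Hd i j Hj'); rewrite E eqxx.
  have Hj' : j < i <= k by rewrite h1; lia.
  by move: (Hd j i Hj'); rewrite E eqxx.
Qed.

Definition simplicial_in (V : finType) (e : rel V) (S : {set V}) w :=
  forall y z, y \in S -> z \in S -> e w y -> e w z -> y != z -> e y z.

Lemma path_all (T : eqType) (r : rel T) (P : pred T) :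
  (forall a b, r a b -> P b) -> forall a p, path r a p -> all P p.
Proof.
move=> Hr a p; elim: p a => //= b p IH a /andP[rab pb].
by rewrite (Hr _ _ rab) (IH _ pb).
Qed.

Lemma dirac (V : finType) (e : rel V) :
  symmetric e -> irreflexive e -> chordal e ->
  forall n (S : {set V}), #|S| < n -> forall u w0, u \in S -> w0 \in S ->
  w0 != u -> ~~ e u w0 ->
  exists w, [/\ w \in S, w != u, ~~ e u w & simplicial_in e S w].
Proof.
move=> sym irr ch n; elim: n => // n IH S Sn u w0 uS w0S w0u uw0.
pose Sm := [set z in S | (z != u) && ~~ e u z].
pose R := [rel a b | [&& e a b, a \in Sm & b \in Sm]].
pose C := [set z | connect R w0 z].
pose D := [set y in S | (y \notin C) && [exists c in C, e y c]].
pose H := C :|: D.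
have w0Sm : w0 \in Sm by rewrite inE w0S w0u uw0.
have CSm : forall z, z \in C -> z \in Sm.
  move=> z; rewrite inE => /connectP [p Hp ->].
  elim/last_ind: p Hp => //= p x _; rewrite rcons_path last_rcons.
  by case/andP=> _ /and3P[].
have w0C : w0 \in C by rewrite inE connect0.
have Cstep : forall c y, c \in C -> y \in Sm -> e c y -> y \in C.
  move=> c y cC ySm Ec; rewrite inE.
  apply: connect_trans (_ : connect R w0 c) _; first by move: cC; rewrite inE.
  by apply: connect1; rewrite /= Ec ySm (CSm _ cC).
have SmE : forall z, (z \in Sm) = [&& z \in S, z != u & ~~ e u z].
  by move=> z; rewrite inE.
have Nb : forall w y, w \in C -> y \in S -> e w y -> y \in H.
  move=> w y wC yS Ewy; rewrite inE.
  case: (boolP (y \in Sm)) => ySm; first by rewrite (Cstep w y).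
  have := CSm _ wC; rewrite !SmE => /and3P[wS wu uw].
  have yC : y \notin C by apply/negP => /CSm; rewrite (negbTE ySm).
  by apply/orP; right; rewrite in_set yS yC /=; apply/existsP; exists w; rewrite wC sym.
have Du : forall y, y \in D -> e u y.
  move=> y; rewrite in_set => /and3P[yS yC /existsP[c /andP[cC Eyc]]].
  case: (boolP (y \in Sm)) => ySm.
    by move: yC; rewrite (Cstep c y) // sym.
  move: ySm; rewrite SmE yS /= negb_and negbK => /orP[/eqP yu|]; last by rewrite negbK.
  by subst y; move: (CSm _ cC); rewrite SmE Eyc !andbF.
have uH : u \notin H.
  rewrite inE negb_or; apply/andP; split.
    by apply/negP => /CSm; rewrite SmE eqxx andbF.
  by apply/negP => /Du; rewrite irr.
have HS : H \subset S.
  apply/subsetP => z; rewrite in_setU => /orP[/CSm|]; first by rewrite SmE => /and3P[].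
  by rewrite in_set => /andP[].
have Hn : #|H| < n.
  have : H \subset S :\ u.
    by apply/subsetP => z zH; rewrite in_setD1 (subsetP HS _ zH) andbT; apply/eqP => E; move: uH; rewrite -E zH.
  move/subset_leq_card; move: (cardsD1 u S); rewrite uS /=; lia.
have Dcl : forall x y, x \in D -> y \in D -> x != y -> e x y.
  move=> x y xD yD xy; apply/negPn/negP => nxy.
  have := xD; rewrite !inE => /and3P[xS xC /existsP[cx /andP[cxC Excx]]].
  have := yD; rewrite !inE => /and3P[yS yC /existsP[cy /andP[cyC Eycy]]].
  have Rsym : connect_sym R.
    by apply: sym_connect_sym => a b /=; rewrite [e b a]sym; case: (a \in Sm); case: (b \in Sm); rewrite ?andbT ?andbF.
  have : connect R cx cy.
    apply: connect_trans (_ : connect R w0 cy); last by move: cyC; rewrite inE.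
    by rewrite Rsym; move: cxC; rewrite inE.
  case/connectP => p Hp Ecy.
  have pSm : all (fun z => z \in Sm) p.
    by apply: (@path_all _ R (fun z => z \in Sm) _ cx p Hp) => a b /and3P[].
  pose f := fun i : nat => if i == 0 then x else if i <= (size p).+1 then nth cx (cx :: p) i.-1 else y.
  apply: (no_bad_walk sym irr ch (k := (size p).+2) (f := f) (u := u)).
  have Hnth : forall i, i <= size p -> nth cx (cx :: p) i \in Sm.
    move=> [|i] lt /=; first exact: CSm.
    by apply: (allP pSm); apply: mem_nth.
  rewrite /walk_ok /f /=; do !split.
  - move=> i; case: i => [|i] lt /=. exact: Excx.
    case: (ltnP i (size p)) => h1.
      have h2 : i < (size p).+1 by apply: leqW.
      have h3 : i.+1 < (size p).+1 by [].
      rewrite h2 h3.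
      by move/(pathP cx): Hp => /(_ i h1) /and3P[].
    have E : i = size p by apply/eqP; rewrite eqn_leq h1 andbT -ltnS.
    rewrite E ltnSn ltnn.
    by move: (nth_last cx (cx :: p)) => /= ->; rewrite -Ecy sym.
  - exact: Du.
  - rewrite ltnn; exact: Du.
  - by rewrite ltnn.
  - by rewrite ltnn.
  - move=> i; case: i => [|i] //= hlt; rewrite ltnS in hlt.
    case: ifPn => [h5|nh]; last by rewrite hlt in nh.
    by move: (Hnth i h5); rewrite SmE => /and3P[_ -> ->].
have finish : forall w, w \in C -> simplicial_in e H w ->
    exists w, [/\ w \in S, w != u, ~~ e u w & simplicial_in e S w].
  move=> w wC sw; exists w; move: (CSm _ wC); rewrite SmE => /and3P[wS wu uw].
  split => // y z yS zS Ey Ez yz.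
  by apply: sw => //; apply: Nb wC _ _.
case: (classic (exists d c, [/\ d \in D, c \in C & ~~ e d c])) =>
  [[d [c [dD cC ndc]]]|nA].
  have dH : d \in H by rewrite inE dD orbT.
  have cH : c \in H by rewrite inE cC.
  have cd : c != d by apply/eqP => E; move: dD; rewrite -E in_set cC andbF.
  have [w [wH wd dw sw]] := IH H Hn d c dH cH cd ndc.
  apply: (finish w _ sw).
  move: wH; rewrite in_setU => /orP[] // wD.
  by move: dw; rewrite Dcl // eq_sym.
have nA' : forall d c, d \in D -> c \in C -> e d c.
  move=> d c dD cC; apply/negPn/negP => ndc; apply: nA; by exists d, c.
case: (classic (exists c1 c2, [/\ c1 \in C, c2 \in C, c2 != c1 & ~~ e c1 c2])) =>
  [[c1 [c2 [c1C c2C c21 nc]]]|nB].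
  have c1H : c1 \in H by rewrite inE c1C.
  have c2H : c2 \in H by rewrite inE c2C.
  have [w [wH wd dw sw]] := IH H Hn c1 c2 c1H c2H c21 nc.
  apply: (finish w _ sw).
  move: wH; rewrite in_setU => /orP[] // wD.
  by move: dw; rewrite sym nA'.
have nB' : forall c1 c2, c1 \in C -> c2 \in C -> c2 != c1 -> e c1 c2.
  move=> c1 c2 c1C c2C c21; apply/negPn/negP => nc; apply: nB; by exists c1, c2.
apply: (finish w0) => // y z yH zH _ _ yz.
move: yH zH; rewrite !in_setU => /orP[yC|yD] /orP[zC|zD].
- by apply: nB'; rewrite // eq_sym.
- by rewrite sym; apply: nA'.
- by apply: nA'.
- by apply: Dcl.
Qed.

Lemma exists_simplicial (V : finType) (e : rel V) :
  symmetric e -> irreflexive e -> chordal e ->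
  forall (S : {set V}) x, x \in S -> exists2 w, w \in S & simplicial_in e S w.
Proof.
move=> sym irr ch S x xS.
case: (classic (exists u w0, [/\ u \in S, w0 \in S, w0 != u & ~~ e u w0])) =>
  [[u [w0 [uS w0S w0u nuw]]]|nE].
  have [w [wS _ _ sw]] := dirac sym irr ch (ltnSn #|S|) uS w0S w0u nuw.
  by exists w.
exists x => // y z yS zS _ _ yz; apply/negPn/negP => nyz; apply: nE.
by exists y, z; rewrite eq_sym.
Qed.

Lemma peo (V : finType) (e : rel V) :
  symmetric e -> irreflexive e -> chordal e ->
  forall n (S : {set V}), #|S| <= n -> exists r : V -> nat,
    {in S &, injective r} /\
    (forall v a b, v \in S -> a \in S -> b \in S -> e v a -> e v b ->
       r a < r v -> r b < r v -> a != b -> e a b).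
Proof.
move=> sym irr ch n; elim: n => [|n IH] S Sn.
  have S0 : S = set0 by apply/eqP; rewrite -cards_eq0 -leqn0.
  by exists (fun _ => 0); subst S; split => [a|v]; rewrite inE.
case: (set_0Vmem S) => [S0|[x xS]].
  by exists (fun _ => 0); subst S; split => [a|v]; rewrite inE.
have [w wS sw] := exists_simplicial sym irr ch xS.
have Sn' : #|S :\ w| <= n by move: (cardsD1 w S); rewrite wS /=; lia.
have [r' [ri rp]] := IH _ Sn'.
pose M := (\max_(a : V) r' a).+1.
have rM : forall a, r' a < M by move=> a; rewrite ltnS leq_bigmax.
exists (fun v => if v == w then M else r' v); split.
  move=> a b aS bS /=.
  case: eqP => [->|aw]; case: eqP => [->|bw] //.
  - by move=> E; move: (rM b); rewrite -E ltnn.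
  - by move=> E; move: (rM a); rewrite E ltnn.
  - by apply: ri; rewrite in_setD1; apply/andP; split => //; apply/eqP.
move=> v a b vS aS bS /=.
case: (v =P w) => [->|vw] eva evb; first by move=> _ _ ab; apply: sw.
case: (a =P w) => [_|aw]; first by move=> h; move: (ltn_trans h (rM v)); rewrite ltnn.
case: (b =P w) => [_|bw]; first by move=> _ h; move: (ltn_trans h (rM v)); rewrite ltnn.
apply: rp => //; rewrite in_setD1; apply/andP; split => //; apply/eqP => //.
Qed.

Lemma argmax_idx (f : nat -> nat) n : 0 < n ->
  exists i, i < n /\ forall j, j < n -> f j <= f i.
Proof.
elim: n => [//|n IH] _; case: n IH => [|n] IH.
  by exists 0; split => // j; rewrite ltnS leqn0 => /eqP ->.
have [i [ilt Hi]] := IH erefl.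
case: (leqP (f n.+1) (f i)) => h.
  exists i; split; first by apply: ltnW.
  move=> j; rewrite ltnS leq_eqVlt => /orP[/eqP ->|] //; exact: Hi.
exists n.+1; split => // j; rewrite ltnS leq_eqVlt => /orP[/eqP ->|jn] //.
by apply: leq_trans (Hi j jn) (ltnW h).
Qed.

Lemma par_acyclic (W : finType) (par : W -> W) (rk : W -> nat) (root : W) :
  par root = root -> (forall x, x != root -> rk (par x) < rk x) ->
  forall c : seq W,
    ~ is_cycle [rel x y | (x != y) && ((par x == y) || (par y == x))] c.
Proof.
move=> proot plt c [uc [c3 Hc]].
set n := size c in c3 Hc.
have n0 : 0 < n by apply: leq_trans c3.
have [i [ilt imax]] := argmax_idx (fun j => rk (nth root c j)) n0.
have key : forall q, q < n -> (nth root c i != nth root c q) ->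
    (par (nth root c i) == nth root c q) || (par (nth root c q) == nth root c i) ->
    par (nth root c i) = nth root c q.
  move=> q qn ne /orP[/eqP //|/eqP E].
  have qr : nth root c q != root.
    by apply/eqP => E'; move: ne; rewrite -E E' proot eqxx.
  by move: (plt _ qr) (imax q qn); rewrite E => h1 h2; move: (leq_trans h1 h2); rewrite ltnn.
pose j := i.+1 %% n.
have jn : j < n by rewrite ltn_mod.
pose k := if i == 0 then n.-1 else i.-1.
have kn : k < n by rewrite /k; case: eqP => _; lia.
have ki : k.+1 %% n = i.
  rewrite /k; case: eqP => [->|i0].
    by rewrite prednK // modnn.
  rewrite prednK ?modn_small //; lia.
have E1 := Hc i ilt root; rewrite /= -/j in E1.
have E2 := Hc k kn root; rewrite /= ki in E2.
case/andP: E1 => ne1 o1; case/andP: E2 => ne2 o2.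
have P1 := key j jn ne1 o1.
have P2 : par (nth root c i) = nth root c k.
  by apply: key => //; [rewrite eq_sym | rewrite orbC].
have : nth root c j = nth root c k by rewrite -P1 -P2.
move/eqP; rewrite nth_uniq // => /eqP jk.
move: jk; rewrite /j /k; case: eqP => [i0|i0].
  rewrite i0 modn_small //; lia.
case: (ltnP i.+1 n) => h.
  rewrite modn_small //; lia.
have -> : i.+1 = n by lia.
rewrite modnn; lia.
Qed.

Lemma part2 (V : finType) (e : rel V) : symmetric e -> irreflexive e -> chordal e ->
  exists (W : finType) (t : rel W) (F : V -> {set W}),
    is_tree t /\ (forall v, subtree t (F v)) /\
    is_intersection_graph e F /\ exactly_hittable F.
Proof.
move=> sym irr ch.
have [r [rinj rpeo]] : exists r : V -> nat, injective r /\
    (forall v a b, e v a -> e v b -> r a < r v -> r b < r v -> a != b -> e a b).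
  have [r [ri rp]] := peo sym irr ch (leqnn #|[set: V]|).
  exists r; split; first by move=> a b; apply: ri; rewrite inE.
  by move=> v a b; apply: rp; rewrite inE.
pose m (v : V) := [pick a | [&& e v a, r a < r v &
                     [forall b, (e v b && (r b < r v)) ==> (r b <= r a)]]].
have mS : forall v a, m v = Some a ->
    [/\ e v a, r a < r v & forall b, e v b -> r b < r v -> r b <= r a].
  move=> v a; rewrite /m; case: pickP => // a' /and3P[H1 H2 /forallP H3] [<-].
  by split => // b H4 H5; move: (H3 b); rewrite H4 H5.
have mN : forall v b, m v = None -> e v b -> r b < r v -> False.
  move=> v b; rewrite /m; case: pickP => // Hn _ Eb Rb.
  have Pb : (fun a => e v a && (r a < r v)) b by rewrite /= Eb Rb.
  case: (@arg_maxnP V b (fun a => e v a && (r a < r v)) r Pb) => a /andP[Ea Ra] Hmax.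
  move: (Hn a); rewrite Ea Ra /=; move/negP; apply.
  by apply/forallP => b'; apply/implyP => Hb'; apply: Hmax.
pose W : finType := option (V * bool).
pose par (x : W) : W := match x with
  | None => None
  | Some (v, true) => Some (v, false)
  | Some (v, false) => if m v is Some a then Some (a, false) else None end.
pose rk (x : W) := match x with None => 0 | Some (v, b) => (r v).*2 + b + 1 end.
have par_lt : forall x, x != None -> rk (par x) < rk x.
  case => [[v []]|] //= _; first lia.
  case E: (m v) => [a|] /=; last by rewrite addn1.
  by case: (mS _ _ E) => _ h _; lia.
pose t := [rel x y : W | (x != y) && ((par x == y) || (par y == x))].
have tsym : symmetric t by move=> x y /=; rewrite eq_sym orbC.
pose F (v : V) := [set x : W | match x with
  | None => false
  | Some (w, true) => w == v
  | Some (w, false) => (w == v) || (e v w && (r v < r w)) end].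
refine (ex_intro _ W _); exists t, F.
split; [|split; [|split]].
- split; first by apply/card_gt0P; exists None.
  split; first by split => // x /=; rewrite eqxx.
  split; last by apply: (@par_acyclic W par rk None).
  have toroot : forall x, connect t x None.
    move=> x; have [k Hk] := ubnP (rk x); elim: k x Hk => // k IH x Hk.
    case: (x =P None) => [->|xn]; first exact: connect0.
    have xn' : x != None by apply/eqP.
    apply: connect_trans (IH (par x) _); last by apply: leq_trans (par_lt x xn') _.
    apply: connect1; rewrite /= eqxx andbT.
    by apply/eqP => E; move: (par_lt x xn'); rewrite -E ltnn.
  move=> x y; apply: connect_trans (toroot x) _.
  by rewrite (sym_connect_sym tsym); apply: toroot.
- move=> v; split.
    by apply/set0Pn; exists (Some (v, true)); rewrite inE /=.
  pose Rv := [rel a b | [&& t a b, a \in F v & b \in F v]].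
  have Rsym : connect_sym Rv.
    apply: sym_connect_sym => a b /=; rewrite [b == a]eq_sym [(par b == a) || _]orbC.
    by case: (a \in F v); case: (b \in F v); rewrite ?andbT ?andbF.
  have lv : Some (v, false) \in F v by rewrite inE /= eqxx.
  have toleaf : forall x, x \in F v -> connect Rv x (Some (v, false)).
    have Hf : forall k w, r w < k -> Some (w, false) \in F v ->
        connect Rv (Some (w, false)) (Some (v, false)).
      elim => // k IH w Hk wF.
      case: (w =P v) => [->|wv]; first exact: connect0.
      have : e v w && (r v < r w) by move: wF; rewrite inE /=; case: eqP.
      case/andP=> evw rvw.
      case E: (m w) => [a|]; last by exfalso; apply: (mN w v E); rewrite // sym.
      case: (mS _ _ E) => ewa raw amax.
      have rva : r v <= r a by apply: amax; rewrite // sym.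
      have wa : Some (w, false) != Some (a, false).
        by apply/eqP => -[E']; move: raw; rewrite E' ltnn.
      case: (a =P v) => [av|av].
        have wv2 : Some (w, false) != Some (v, false) by rewrite -av.
        by apply: connect1; rewrite /= wv2 E av eqxx /= lv wF.
      have rva' : r v < r a.
        rewrite ltn_neqAle rva andbT; apply/eqP => E'.
        by apply: av; apply: rinj.
      have eva : e v a.
        apply: (rpeo w) => //; first by rewrite sym.
        by apply/eqP => E'; apply: av.
      have aF : Some (a, false) \in F v by rewrite inE /= eva rva' orbT.
      apply: connect_trans (IH a _ aF); last by apply: leq_trans raw _.
      by apply: connect1; rewrite /= wa wF aF /= E eqxx.
    case => [[w []]|] //.
      rewrite inE /= => /eqP ->; apply: connect1.
      have ne : Some (v, true) != Some (v, false) :> W by apply/eqP => -[].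
      by rewrite /= lv inE /= !eqxx ne.
    by move=> wF; apply: (Hf (r w).+1).
    by rewrite inE.
  move=> x y xF yF; apply: connect_trans (toleaf x xF) _.
  by rewrite Rsym; apply: toleaf.
- split.
    move=> a b Eab; have : Some (a, true) \in F b by rewrite -Eab inE /=.
    by rewrite inE /= => /eqP.
  move=> u v uv; split.
    move=> euv; apply/set0Pn.
    case: (ltngtP (r u) (r v)) => h.
    + by exists (Some (v, false)); rewrite !inE /= eqxx euv h orbT.
    + by exists (Some (u, false)); rewrite !inE /= eqxx sym euv h orbT.
    + by move: uv; rewrite (rinj _ _ h) eqxx.
  case/set0Pn => x; rewrite !inE; case: x => [[w []]|] //=.
    by case/andP => /eqP -> /eqP E; move: uv; rewrite E eqxx.
  case/andP => /orP[/eqP wu|/andP[euw ruw]] /orP[/eqP wv|/andP[evw rvw]].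
  + by move: uv; rewrite -wu -wv eqxx.
  + by rewrite -wu sym.
  + by rewrite -wv.
  + by apply: (rpeo w) => //; rewrite sym.
- exists [set x : W | if x is Some (_, true) then true else false] => v.
  have -> : [set x : W | if x is Some (_, true) then true else false] :&: F v
            = [set Some (v, true)].
    apply/setP => x; rewrite !inE; case: x => [[w []]|] //=.
    by apply/eqP/eqP => [->|[->]].
    by apply/esym/eqP => -[].
  exact: cards1.
Qed.

Lemma part1 (V : finType) (e : rel V) : symmetric e -> irreflexive e ->
  exists (U : finType) (F : V -> {set U}),
    is_intersection_graph e F /\ exactly_hittable F.
Proof.
move=> sym irr.
pose F (v : V) := [set p : V * V | ((p.1 == v) && (p.2 == v)) ||
                                   (e p.1 p.2 && ((p.1 == v) || (p.2 == v)))].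
pose U : finType := (V * V)%type.
refine (ex_intro _ U _); exists F; split; first split.
- move=> a b Eab; have : (a, a) \in F b by rewrite -Eab inE /= eqxx.
  by rewrite inE /= irr /= andbb orbF => /eqP.
- move=> u v uv; split.
    by move=> euv; apply/set0Pn; exists (u, v); rewrite !inE /= euv !eqxx !orbT.
  case/set0Pn => [[a b]]; rewrite !inE /= => /andP[Hu Hv].
  case/orP: Hu => [/andP[/eqP au /eqP bu]|/andP[eab /orP[/eqP au|/eqP bu]]].
  + subst; case/orP: Hv => [/andP[/eqP E _]|/andP[]]; first by move: uv; rewrite E eqxx.
    by rewrite irr.
  + subst; case/orP: Hv => [/andP[/eqP E _]|/andP[_ /orP[/eqP E|/eqP E]]].
    * by move: uv; rewrite E eqxx.
    * by move: uv; rewrite E eqxx.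
    * by subst.
  + subst; case/orP: Hv => [/andP[_ /eqP E]|/andP[_ /orP[/eqP E|/eqP E]]].
    * by move: uv; rewrite E eqxx.
    * by subst; rewrite sym.
    * by move: uv; rewrite E eqxx.
- exists [set p : V * V | p.1 == p.2] => v.
  have -> : [set p : V * V | p.1 == p.2] :&: F v = [set (v, v)].
    apply/setP => -[a b]; rewrite !inE /=.
    case: (a =P b) => [->|ab] /=; last first.
      by apply/esym/eqP => -[E1 E2]; apply: ab; rewrite E1 E2.
    by rewrite irr /= andbb orbF; apply/eqP/eqP => [->|[->]].
  exact: cards1.
Qed.

Theorem theorem10 :
  (forall (V : finType) (e : rel V), simple_graph e ->
     exists (U : finType) (F : V -> {set U}),
       is_intersection_graph e F /\ exactly_hittable F) /\
  (forall (V : finType) (e : rel V),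
     simple_graph e -> connected_graph e -> chordal e ->
     exists (W : finType) (t : rel W) (F : V -> {set W}),
       is_tree t /\ (forall v, subtree t (F v)) /\
       is_intersection_graph e F /\ exactly_hittable F).
Proof.
split.
  by move=> V e [sym irr]; apply: part1.
by move=> V e [sym irr] _ ch; apply: part2.
Qed.
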